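(* Let ${\bm L},{\bm L}_1,\dots,{\bm L}_n\in\mathbb{S}^d_{++}$ satisfy $\frac1n\sum_{i=1}^n\lambda_{\max}({\bm L}^{-1})\lambda_{\max}({\bm L}_i)\lambda_{\max}({\bm L}_i{\bm L}^{-1})=1$, let $p\in(0,1]$, $\alpha=\frac{1-p}{np}$, $\beta=\frac1n\sum_i\lambda_{\max}({\bm L}_i)\lambda_{\max}({\bm L}^{-1}{\bm L}_i)$, $\omega=\lambda_{\max}(\mathbb{E}[{\bm S}^2])-1$, and $${\bm D}^*_{{\bm L}^{-1}}=\frac{2}{1+\sqrt{1+4\alpha\beta\,\lambda_{\max}(\mathbb{E}[{\bm S}{\bm L}^{-1}{\bm S}]-{\bm L}^{-1})}}\;{\bm L}^{-1}.$$ Then $\beta\,\lambda_{\max}(\mathbb{E}[{\bm S}{\bm L}^{-1}{\bm S}]-{\bm L}^{-1})\le\omega$, and $$\frac{1}{\det({\bm D}^*_{{\bm L}^{-1}})^{1/d}}\le\lambda_{\max}({\bm L})\left(1+\sqrt{\frac{(1-p)\,\omega}{pn}}\right).$$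
   Context: $\mathbb{S}^d_{++}$: symmetric positive definite matrices; $\lambda_{\max}$: largest eigenvalue. ${\bm S}$ is a random symmetric positive semidefinite $d\times d$ matrix with $\mathbb{E}[{\bm S}]={\bm I}_d$ and finite second moments. *)

(* Defs.v *)
From HB Require Import structures.
From mathcomp Require Import all_boot all_order all_algebra.
From mathcomp Require Import all_classical all_reals all_analysis.
Set Implicit Arguments. Unset Strict Implicit. Unset Printing Implicit Defensive.
Import Order.TTheory GRing.Theory Num.Theory.
Local Open Scope ring_scope.
Local Open Scope classical_set_scope.

(* largest eigenvalue of a real square matrix: the supremum of its (real)
   eigenvalues (all matrices to which it is applied have real spectrum). *)
Definition lambda_max (R : realType) (d : nat) (A : 'M[R]_d) : R :=
  sup [set a : R | eigenvalue A a].

Definition spd (R : realType) (d : nat) (A : 'M[R]_d) : Prop :=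
  A^T = A /\ forall v : 'cV[R]_d, v != 0 -> 0 < (v^T *m A *m v) 0 0.

Definition spsd (R : realType) (d : nat) (A : 'M[R]_d) : Prop :=
  A^T = A /\ forall v : 'cV[R]_d, 0 <= (v^T *m A *m v) 0 0.

Definition mexpect (R : realType) (dT : measure_display) (T : measurableType dT)
  (P : probability T R) (d : nat) (X : T -> 'M[R]_d) : 'M[R]_d :=
  \matrix_(i, j) fine (\int[P]_x (X x i j)%:E)%E.

(* Main.v *)
Require Import Defs.
From HB Require Import structures.
From mathcomp Require Import all_boot all_order all_algebra.
From mathcomp Require Import all_classical all_reals all_analysis.
From mathcomp Require Import complex spectral sesquilinear.
From mathcomp Require Import lra ring.
Import Order.TTheory GRing.Theory Num.Theory.
Local Open Scope ring_scope.

Module PM.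

Section Prob.
Context {R : realType} {dT : measure_display} {T : measurableType dT}
  (P : probability T R).

Definition Ex (f : T -> R) := fine (\int[P]_x (f x)%:E)%E.
Definition Int (f : T -> R) := P.-integrable setT (fun x => (f x)%:E).

Lemma Int_add {f g} : Int f -> Int g -> Int (fun x => f x + g x).
Proof. by move=> hf hg; exact: (integrableD measurableT hf hg). Qed.

Lemma Int_scale c {f} : Int f -> Int (fun x => c * f x).
Proof. by move=> hf; exact: (integrableZl measurableT c hf). Qed.

Lemma Int_cst c : Int (fun _ => c).
Proof. exact: (finite_measure_integrable_cst P c measurableT). Qed.

Lemma Ex_add {f g} : Int f -> Int g -> Ex (fun x => f x + g x) = Ex f + Ex g.
Proof.
move=> hf hg; rewrite /Ex.
have -> : (\int[P]_x ((f x + g x)%:E))%E = (\int[P]_x ((f x)%:E + (g x)%:E))%E by [].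
rewrite integralD //; rewrite fineD //; exact: integrable_fin_num.
Qed.

Lemma Ex_scale c {f} : Int f -> Ex (fun x => c * f x) = c * Ex f.
Proof.
move=> hf; rewrite /Ex.
have -> : (\int[P]_x ((c * f x)%:E))%E = (\int[P]_x (c%:E * (f x)%:E))%E by [].
rewrite integralZl //; rewrite fineM //; exact: integrable_fin_num.
Qed.

Lemma Int_sub {f g} : Int f -> Int g -> Int (fun x => f x - g x).
Proof.
move=> hf hg; have := Int_add (Int_scale (-1) hg) hf.
by rewrite (_ : (fun x => _) = (fun x => f x - g x)) //; apply: funext => x; rewrite mulN1r addrC.
Qed.

Lemma Ex_sub {f g} : Int f -> Int g -> Ex (fun x => f x - g x) = Ex f - Ex g.
Proof.
move=> hf hg; have := Ex_add hf (Int_scale (-1) hg); rewrite Ex_scale // mulN1r.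
by rewrite (_ : (fun x => _) = (fun x => f x - g x)) //; apply: funext => x; rewrite mulN1r.
Qed.

Lemma Ex_cst c : Ex (fun _ => c) = c.
Proof.
rewrite /Ex. have -> : (\int[P]_x ((c)%:E))%E = (\int[P]_x (cst c%:E x))%E by [].
rewrite (@integral_cst _ _ _ P setT measurableT); apply: (@eq_trans _ _ (fine (c%:E * 1%E))); last by rewrite mule1.
by congr (fine (_ * _)); exact: probability_setT.
Qed.

Lemma Ex_le {f g} : Int f -> Int g -> (forall x, f x <= g x) -> Ex f <= Ex g.
Proof.
move=> hf hg hfg; rewrite /Ex; apply: fine_le; try exact: integrable_fin_num.
by apply: le_integral => // x _; rewrite lee_fin.
Qed.

Lemma Int_sum n (F : 'I_n -> T -> R) : (forall i, Int (F i)) ->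
  Int (fun x => \sum_i F i x).
Proof.
move=> hF; have := integrable_sum measurableT (index_enum 'I_n) (P := xpredT)
  (h := fun i x => (F i x)%:E) (fun i _ => hF i).
rewrite /Int (_ : (fun x => (\sum_i F i x)%:E) = (fun x => \sum_i (F i x)%:E)) //.
by apply: funext => x; rewrite sumEFin.
Qed.

Lemma Ex_sum n (F : 'I_n -> T -> R) : (forall i, Int (F i)) ->
  Ex (fun x => \sum_i F i x) = \sum_i Ex (F i).
Proof.
move=> hF; rewrite /Ex.
have -> : (\int[P]_x ((\sum_i F i x)%:E))%E = (\int[P]_x (\sum_i (F i x)%:E))%E.
  by apply: eq_integral => x _; rewrite sumEFin.
rewrite integral_sum //.
rewrite (eq_bigr (fun i => (fine (\int[P]_x (F i x)%:E))%:E)); last first.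
  by move=> i _; rewrite fineK //; exact: (integrable_fin_num measurableT (hF i)).
by rewrite sumEFin.
Qed.

Lemma bilE n (a : 'rV[R]_n) (Y : 'M[R]_n) (b : 'cV[R]_n) :
  (a *m Y *m b) 0 0 = \sum_j \sum_k (a 0 k * b j 0) * Y k j.
Proof.
rewrite mxE; apply: eq_bigr => j _; rewrite mxE big_distrl /=.
by apply: eq_bigr => k _; rewrite mulrAC -!mulrA [b j 0 * _]mulrC.
Qed.

Definition IntM {n} (X : T -> 'M[R]_n) := forall i j, Int (fun x => X x i j).

Lemma Ex_bil {n} {X : T -> 'M[R]_n} (a : 'rV_n) (b : 'cV_n) : IntM X ->
  Int (fun x => (a *m X x *m b) 0 0) /\
  Ex (fun x => (a *m X x *m b) 0 0) = (a *m mexpect P X *m b) 0 0.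
Proof.
move=> hX.
have -> : (fun x => (a *m X x *m b) 0 0) =
          (fun x => \sum_j \sum_k (a 0 k * b j 0) * X x k j).
  by apply: funext => x; rewrite bilE.
split.
  by apply: Int_sum => j; apply: Int_sum => k; apply: Int_scale.
rewrite bilE Ex_sum; last first.
  by move=> j; apply: Int_sum => k; apply: Int_scale.
apply: eq_bigr => j _; rewrite Ex_sum; last by move=> k; apply: Int_scale.
by apply: eq_bigr => k _; rewrite Ex_scale // mxE.
Qed.

Context {n : nat} {S : T -> 'M[R]_n}
  (S_meas : forall i j, measurable_fun setT (fun x => S x i j))
  (S_sq : forall i j, P.-integrable setT (fun x => ((S x i j) ^+ 2)%:E)).

Lemma Int_S i j : Int (fun x => S x i j).
Proof.
have hg := Int_add (S_sq i j) (Int_cst 1); rewrite /Int in hg *.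
eapply le_integrable; [exact: measurableT| | |exact: hg].
  by apply/measurable_realfun.measurable_EFinP; exact: S_meas.
move=> x _; rewrite !abse_EFin lee_fin.
have h0 : 0 <= `|S x i j| by [].
rewrite [X in _ <= X]ger0_norm; last by rewrite addr_ge0 // sqr_ge0.
rewrite -real_normK ?num_real //; nra.
Qed.

Lemma Int_SS i j k l : Int (fun x => S x i j * S x k l).
Proof.
have hg := Int_add (S_sq i j) (S_sq k l); rewrite /Int in hg *.
eapply le_integrable; [exact: measurableT| | |exact: hg].
  by apply/measurable_realfun.measurable_EFinP; apply: measurable_realfun.measurable_funM; exact: S_meas.
move=> x _; rewrite !abse_EFin lee_fin.
rewrite [X in _ <= X]ger0_norm; last by rewrite addr_ge0 // sqr_ge0.
rewrite normrM -(real_normK (num_real (S x i j))) -(real_normK (num_real (S x k l))).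
have h0 : 0 <= `|S x i j| by [].
have h1 : 0 <= `|S x k l| by [].
nra.
Qed.

Lemma IntM_S : IntM S.
Proof. by move=> i j; exact: Int_S. Qed.

Lemma IntM_SMS (M : 'M[R]_n) : IntM (fun x => S x *m M *m S x).
Proof.
move=> i j.
have -> : (fun x => (S x *m M *m S x) i j) =
   (fun x => \sum_k \sum_l M l k * (S x i l * S x k j)).
  apply: funext => x; rewrite mxE; apply: eq_bigr => k _; rewrite mxE big_distrl.
  by apply: eq_bigr => l _ /=; rewrite mulrCA mulrA.
by apply: Int_sum => k; apply: Int_sum => l; apply: Int_scale; exact: Int_SS.
Qed.

Lemma IntM_SS : IntM (fun x => S x *m S x).
Proof.
move=> i j.
have -> : (fun x => (S x *m S x) i j) = (fun x => \sum_k (S x i k * S x k j)).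
  by apply: funext => x; rewrite mxE.
by apply: Int_sum => k; exact: Int_SS.
Qed.

End Prob.

End PM.
Import PM.
Module SpM.
Local Open Scope sesquilinear_scope.


Section Spec.
Context {R : realType}.
Local Notation C := (R[i]).
Local Notation fC := (real_complex R).

Lemma realC (x : R) : (x%:C)%C \is @Num.real C.
Proof.
rewrite realE !lecE /= eqxx /=.
by case: (lerP 0 x) => // /ltW ->; rewrite orbT.
Qed.

Lemma realmxA {m n} (A : 'M[R]_(m, n)) : map_mx fC A \is a realmx.
Proof. by apply/mxOverP => i j; rewrite mxE realC. Qed.

Lemma spec {n} {A : 'M[R]_n} : A^T = A ->
  exists (Q : 'M[C]_n) (r : 'rV[R]_n), Q \is unitarymx /\
    map_mx fC A = invmx Q *m diag_mx (map_mx fC r) *m Q.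
Proof.
move=> hA.
have hs : map_mx fC A \is symmetricmx.
  apply/is_hermitianmxP; rewrite expr0 scale1r; apply/matrixP => i j.
  by rewrite !mxE -[in LHS]hA mxE.
have hh := realsym_hermsym hs (realmxA A).
have hN := hermitian_normalmx hh.
have hR := hermitian_spectral_diag_real hh.
exists (spectralmx (map_mx fC A)), (map_mx (@complex.Re R) (spectral_diag (map_mx fC A))).
split; first exact: spectral_unitarymx.
have -> : map_mx fC (map_mx (@complex.Re R) (spectral_diag (map_mx fC A))) =
          spectral_diag (map_mx fC A).
  apply/matrixP => i j; rewrite !mxE.
  have := mxOverP hR i j; set z := spectral_diag _ i j.
  case: z => a b /= hz.
  have : b = 0.
    move: hz; rewrite realE !lecE /=.
    by case/orP => /andP [/eqP h _] //; rewrite -h.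
  by move=> ->.
exact/orthomx_spectralP.
Qed.


Lemma unitVt {n} (Q : 'M[C]_n) : Q \is unitarymx -> Q^t* *m Q = 1%:M.
Proof. by move=> hQ; rewrite -invmx_unitary // mulVmx // unitarymx_unit. Qed.

Lemma eig_spec {n} {A : 'M[R]_n} {Q : 'M[C]_n} {r : 'rV[R]_n} :
  Q \is unitarymx ->
  map_mx fC A = invmx Q *m diag_mx (map_mx fC r) *m Q ->
  forall a, eigenvalue A a <-> exists i, a = r 0 i.
Proof.
move=> hQ hA a; have hQu := unitarymx_unit hQ; split.
  move=> /eigenvalueP [v hv v0].
  set w := map_mx fC v *m invmx Q.
  have hw : w *m diag_mx (map_mx fC r) = (fC a) *: w.
    have := congr1 (map_mx fC) hv; rewrite map_mxM map_mxZ hA.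
    move=> /(congr1 (fun X => X *m invmx Q)).
    by rewrite !mulmxA mulmxK // -scalemxAl.
  have w0 : w != 0.
    apply: contraNneq v0 => hw0.
    have : map_mx fC v = w *m Q by rewrite /w mulmxKV //.
    by rewrite hw0 mul0mx => /eqP; rewrite map_mx_eq0.
  have [i hi] : exists i, w 0 i != 0.
    apply/existsP; apply: contraNT w0 => /existsPn h.
    apply/eqP; apply/rowP => i; have := h i; rewrite negbK => /eqP ->; by rewrite mxE.
  exists i; apply: (@complexI R).
  clearbody w; move/rowP: hw => /(_ i); rewrite mul_mx_diag !mxE.
  by rewrite [RHS]mulrC => /(mulfI hi) ->.
case=> i ->.
rewrite eigenvalue_root_char -(fmorph_root fC) map_char_poly -eigenvalue_root_char.
apply/eigenvalueP; exists (delta_mx 0 i *m Q).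
  rewrite hA !mulmxA mulmxK //.
  rewrite scalemxAl; congr (_ *m _).
  apply/matrixP => k l; rewrite mul_mx_diag !mxE.
  rewrite mulrC; case: (l =P i) => [->|_] //; by rewrite andbF /= !mulr0.
apply: contraTneq isT => h.
have : delta_mx 0 i = 0 :> 'M[C]_(1, n).
  by rewrite -[delta_mx _ _](mulmxK hQu) h mul0mx.
by move/matrixP => /(_ 0 i); rewrite !mxE !eqxx /= => /eqP; rewrite oner_eq0.
Qed.

Lemma lmax_spec {n} (hn : (0 < n)%N) {A : 'M[R]_n} {Q : 'M[C]_n} {r : 'rV[R]_n} :
  Q \is unitarymx ->
  map_mx fC A = invmx Q *m diag_mx (map_mx fC r) *m Q ->
  exists i, lambda_max A = r 0 i /\ forall j, r 0 j <= r 0 i.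
Proof.
move=> hQ hA; have hE := eig_spec hQ hA.
case: (@arg_maxP _ _ _ (Ordinal hn) xpredT (fun i => r 0 i) isT) => i _ hi.
have hub : forall a, eigenvalue A a -> a <= r 0 i.
  by move=> a /hE [j ->]; exact: hi.
have hin : eigenvalue A (r 0 i) by apply/hE; exists i.
exists i; split; last by move=> j; exact: hi.
rewrite /lambda_max; apply/eqP; rewrite eq_le; apply/andP; split.
  apply: ge_sup; first by exists (r 0 i).
  by move=> a ha; exact: hub.
by apply: ub_le_sup => //; exists (r 0 i) => a ha; exact: hub.
Qed.

Lemma ray_diag {n} (x : 'rV[R]_n) (m : R) (hm : forall j, x 0 j <= m)
  (w : 'cV[C]_n) :
  (w^t* *m diag_mx (map_mx fC x) *m w) 0 0 <= fC m * (w^t* *m w) 0 0.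
Proof.
rewrite mul_mx_diag !mxE mulr_sumr; apply: ler_sum => j _; rewrite !mxE.
rewrite mulrAC mulrC; apply: ler_wpM2r; first by rewrite mulrC mul_conjC_ge0.
by rewrite lecR.
Qed.

Lemma rayleigh {n} (hn : (0 < n)%N) (A : 'M[R]_n) : A^T = A ->
  forall v : 'cV[R]_n, (v^T *m A *m v) 0 0 <= lambda_max A * (v^T *m v) 0 0.
Proof.
move=> hA v; have [Q [r [hQ hAc]]] := spec hA.
have [i [-> hi]] := lmax_spec hn hQ hAc.
rewrite -lecR.
have e1 : ((v^T *m A *m v) 0 0)%:C%C =
   (map_mx fC v^T *m map_mx fC A *m map_mx fC v) 0 0.
  by rewrite -!map_mxM [RHS]mxE.
have e2 : ((v^T *m v) 0 0)%:C%C = (map_mx fC v^T *m map_mx fC v) 0 0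
  by rewrite -!map_mxM [RHS]mxE.
rewrite (rmorphM fC) e1 [X in _ * X](_ : _ = (map_mx fC v^T *m map_mx fC v) 0 0); last exact: e2.
rewrite hAc invmx_unitary //.
set w := Q *m map_mx fC v.
have hw : map_mx fC v^T *m Q^t* = w^t*.
  rewrite /w trmx_mul map_mxM; congr (_ *m _).
  rewrite map_trmx -[LHS](realmxC (realmxA v^T)); congr (map_mx _ _).
have e3 : map_mx fC v^T *m map_mx fC v = w^t* *m w.
  by rewrite -hw /w !mulmxA -[_ *m Q^t* *m Q]mulmxA unitVt // mulmx1.
rewrite e3 !mulmxA hw -[w^t* *m _ *m Q *m _]mulmxA -/w.
by rewrite -[w^t* *m Q *m _]mulmxA -/w; exact: (ray_diag r (r 0 i) hi w).
Qed.

Lemma det_spec {n} {A : 'M[R]_n} {Q : 'M[C]_n} {r : 'rV[R]_n} :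
  Q \is unitarymx ->
  map_mx fC A = invmx Q *m diag_mx (map_mx fC r) *m Q ->
  \det A = \prod_j r 0 j.
Proof.
move=> hQ hA; apply: (@complexI R).
have hu : \det Q != 0.
  by have := unitarymx_unit hQ; rewrite unitmxE unitfE.
rewrite rmorph_prod -det_map_mx hA !det_mulmx det_inv det_diag mulrAC mulVf //.
by rewrite mul1r; apply: eq_bigr => j _; rewrite mxE.
Qed.

End Spec.

Section Pos.
Context {R : realType}.

Lemma sq_ge0 {n} (v : 'rV[R]_n) : 0 <= (v *m v^T) 0 0.
Proof. by rewrite mxE; apply: sumr_ge0 => k _; rewrite mxE -expr2 sqr_ge0. Qed.

Lemma sq_gt0 {n} {v : 'rV[R]_n} : v != 0 -> 0 < (v *m v^T) 0 0.
Proof.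
move=> v0; rewrite lt_def sq_ge0 andbT; apply: contraNneq v0.
rewrite mxE => hs.
have hp : forall k : 'I_n, true -> 0 <= v 0 k * v^T k 0.
  by move=> k _; rewrite mxE -expr2 sqr_ge0.
have h := psumr_eq0P hp hs.
apply/eqP; apply/rowP => k; have := h k isT; rewrite !mxE.
by move/eqP; rewrite mulf_eq0 orbb => /eqP.
Qed.

Lemma eig_pos {n} {A : 'M[R]_n} {a} : spd A -> eigenvalue A a -> 0 < a.
Proof.
move=> [_ hA] /eigenvalueP [v hv v0].
have := hA v^T; rewrite trmx_eq0 trmxK => /(_ v0).
rewrite hv -scalemxAl mxE.
have := sq_gt0 v0 => h1 h2; nra.
Qed.

End Pos.

End SpM.
Import SpM.

Module M1.

Section Aux.
Context {R : realType}.

Lemma final_ineq (y z : R) : y <= z ->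
  (1 + Num.sqrt (1 + 4 * y)) / 2 <= 1 + Num.sqrt z.
Proof.
move=> hyz.
have h1 : Num.sqrt (1 + 4 * y) <= Num.sqrt (1 + 4 * z) by apply: ler_wsqrtr; lra.
have ht := sqrtr_ge0 z.
have h2 : Num.sqrt (1 + 4 * z) <= 1 + 2 * Num.sqrt z.
  case: (lerP 0 z) => hz.
    rewrite -[X in _ <= X]ger0_norm; last by lra.
    rewrite -sqrtr_sqr; apply: ler_wsqrtr.
    have := sqr_sqrtr hz; nra.
  rewrite -[X in X <= _]/(Num.sqrt (1 + 4 * z)).
  have : Num.sqrt (1 + 4 * z) <= Num.sqrt 1 by apply: ler_wsqrtr; lra.
  rewrite sqrtr1; lra.
lra.
Qed.

Lemma eig_conj {n} (A B : 'M[R]_n) a : B \in unitmx ->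
  eigenvalue (A *m B) a -> eigenvalue (B *m A) a.
Proof.
move=> hB /eigenvalueP [v hv v0]; apply/eigenvalueP.
exists (v *m invmx B).
  by rewrite mulmxA mulmxKV // scalemxAl -hv mulmxA mulmxK.
apply: contraNneq v0 => h.
by rewrite -[v](mulmxKV hB) h mul0mx.
Qed.

Lemma lmax_conj {n} (A B : 'M[R]_n) : B \in unitmx ->
  lambda_max (A *m B) = lambda_max (B *m A).
Proof.
move=> hB; rewrite /lambda_max; congr sup; apply: funext => a.
apply: propext; split => /= h.
  exact: eig_conj.
have hB' : invmx B \in unitmx by rewrite unitmx_inv.
have := @eig_conj _ (B *m A *m B) (invmx B) a hB'.
rewrite -!mulmxA mulmxV // mulmx1 mulKmx //; apply.
exact: h.
Qed.


Lemma expand_quad {n} (W Y : 'M[R]_n) (v : 'rV[R]_n) : Y^T = Y ->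
  ((v *m (Y - 1%:M)) *m W *m (v *m (Y - 1%:M))^T) 0 0 =
  (v *m (Y *m W *m Y) *m v^T) 0 0 - (v *m Y *m (W *m v^T)) 0 0
  - (v *m W *m Y *m v^T) 0 0 + (v *m W *m v^T) 0 0.
Proof.
move=> hY; rewrite trmx_mul (raddfB (@trmx _ n n)) /= trmx1 hY.
rewrite (mulmxBr v Y 1%:M) mulmx1 (mulmxBl (v *m Y) v W) (mulmxBl Y 1%:M v^T) mul1mx.
rewrite (mulmxBr (v *m Y *m W - v *m W) (Y *m v^T) v^T).
rewrite (mulmxBl (v *m Y *m W) (v *m W) (Y *m v^T)) (mulmxBl (v *m Y *m W) (v *m W) v^T) !mulmxA.
move: (v *m Y *m W *m Y *m v^T) (v *m W *m Y *m v^T) (v *m Y *m W *m v^T)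
  (v *m W *m v^T) => a b c e.
rewrite !mxE; move: (a 0 0) (b 0 0) (c 0 0) (e 0 0) => a1 b1 c1 e1; ring.
Qed.

Lemma mxBE {m n} (X Y : 'M[R]_(m, n)) i j : (X - Y) i j = X i j - Y i j.
Proof. by rewrite !mxE. Qed.

End Aux.

End M1.
Import M1.

Theorem corollary3 (R : realType) (dT : measure_display) (T : measurableType dT)
  (P : probability T R) (d n : nat) (hd : (0 < d)%N) (hn : (0 < n)%N)
  (S : T -> 'M[R]_d)
  (S_meas : forall i j, measurable_fun setT (fun x => S x i j))
  (S_sq : forall i j, P.-integrable setT (fun x => ((S x i j) ^+ 2)%:E))
  (S_psd : forall x, spsd (S x))
  (S_mean : mexpect P S = 1%:M)
  (L : 'M[R]_d) (Ls : 'I_n -> 'M[R]_d)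
  (hL : spd L) (hLs : forall i, spd (Ls i))
  (hnorm : n%:R^-1 * \sum_(i < n) lambda_max (invmx L) * lambda_max (Ls i)
              * lambda_max (Ls i *m invmx L) = 1)
  (p : R) (hp0 : 0 < p) (hp1 : p <= 1) :
  let alpha := (1 - p) / (n%:R * p) in
  let beta := n%:R^-1 * \sum_(i < n) lambda_max (Ls i) * lambda_max (invmx L *m Ls i) in
  let omega := lambda_max (mexpect P (fun x => S x *m S x)) - 1 in
  let lam := lambda_max (mexpect P (fun x => S x *m invmx L *m S x) - invmx L) in
  let Dstar := (2 / (1 + Num.sqrt (1 + 4 * alpha * beta * lam))) *: invmx L in
  beta * lam <= omega /\
  (powR (\det Dstar) (d%:R^-1))^-1
    <= lambda_max L * (1 + Num.sqrt ((1 - p) * omega / (p * n%:R))).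
Proof.
move=> alpha beta omega lam Dstar.
have [hLs' hLp] := hL.
have [QL [rL [hQL hLc]]] := spec hLs'.
have hrL : forall j, 0 < rL 0 j.
  by move=> j; apply: (eig_pos hL); apply/(eig_spec hQL hLc); exists j.
have [iL [hlL hiL]] := lmax_spec hd hQL hLc.
have hdetL : \det L = \prod_j rL 0 j := det_spec hQL hLc.
have detL_gt0 : 0 < \det L by rewrite hdetL; apply: prodr_gt0 => j _.
have hLu : L \in unitmx by rewrite unitmxE unitfE gt_eqF.
have hMu : invmx L \in unitmx by rewrite unitmx_inv.
set M := invmx L in hMu hnorm beta lam Dstar *.
have hMs : M^T = M by rewrite /M trmx_inv hLs'.
have hMspd : spd M.
  split => // v v0.
  have hMv : M *m v != 0.
    by apply: contraNneq v0 => h; rewrite -[v](mulKVmx hLu) h mulmx0.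
  have := hLp _ hMv; rewrite trmx_mul hMs.
  by rewrite -[v^T *m M *m L]mulmxA mulVmx // mulmx1 mulmxA.
have [QM [rM [hQM hMc]]] := spec hMs.
have [iM [hlM hiM]] := lmax_spec hd hQM hMc.
have mu_pos : 0 < lambda_max M.
  by rewrite hlM; apply: (eig_pos hMspd); apply/(eig_spec hQM hMc); exists iM.
set mu := lambda_max M in hnorm mu_pos *.
have hbeta : mu * beta = 1.
  rewrite -hnorm /beta mulrCA; congr (_ * _); rewrite mulr_sumr.
  by apply: eq_bigr => i _; rewrite lmax_conj // mulrA.
have beta_pos : 0 < beta by nra.
have hSs : forall x, (S x)^T = S x by move=> x; case: (S_psd x).
have symE : forall X : T -> 'M[R]_d, (forall x, (X x)^T = X x) ->
    (mexpect P X)^T = mexpect P X.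
  move=> X hX; apply/matrixP => i j; rewrite !mxE; congr (fine _).
  by apply: eq_integral => x _; rewrite -[in RHS]hX mxE.
set A := mexpect P (fun x => S x *m M *m S x) - M in lam Dstar *.
set B := mexpect P (fun x => S x *m S x) in omega *.
have hAs : A^T = A.
  rewrite /A (raddfB (@trmx _ d d)) /= hMs symE // => x.
  by rewrite !trmx_mul hSs hMs mulmxA.
have hBs : B^T = B by rewrite /B symE // => x; rewrite trmx_mul hSs.
have hlam : lam <= mu * omega.
  have [QA [rA [hQA hAc]]] := spec hAs.
  have [iA [hlA _]] := lmax_spec hd hQA hAc.
  have : eigenvalue A (rA 0 iA) by apply/(eig_spec hQA hAc); exists iA.
  move=> /eigenvalueP [v hv v0].
  have vv := sq_gt0 v0.
  rewrite /lam hlA; set r := rA 0 iA in hv *.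
  have e1 : (v *m A *m v^T) 0 0 = r * (v *m v^T) 0 0.
    by rewrite hv -scalemxAl mxE.
  have IS := IntM_S P S_meas S_sq.
  have ISMS := IntM_SMS P S_meas S_sq M.
  have ISS := IntM_SS P S_meas S_sq.
  have [I1 E1] := Ex_bil P v v^T ISMS.
  have [I2 E2] := Ex_bil P v (M *m v^T) IS.
  have [I3 E3] := Ex_bil P (v *m M) v^T IS.
  have [I4 E4] := Ex_bil P v v^T ISS.
  have [I5 E5] := Ex_bil P v v^T IS.
  pose g := fun x => (v *m (S x *m M *m S x) *m v^T) 0 0
    - (v *m S x *m (M *m v^T)) 0 0 - (v *m M *m S x *m v^T) 0 0
    + (v *m M *m v^T) 0 0.
  pose h := fun x => (v *m (S x *m S x) *m v^T) 0 0
    - (v *m S x *m v^T) 0 0 - (v *m S x *m v^T) 0 0 + (v *m v^T) 0 0.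
  have Ig : Int P g := Int_add P (Int_sub P (Int_sub P I1 I2) I3) (Int_cst P _).
  have Ih : Int P h := Int_add P (Int_sub P (Int_sub P I4 I5) I5) (Int_cst P _).
  have Eg : Ex P g = (v *m A *m v^T) 0 0.
    rewrite /g Ex_add ?Ex_sub ?Ex_cst //; try (by do ?apply: Int_sub); try exact: Int_cst.
    rewrite E1 E2 E3 S_mean !mulmx1 mulmxA.
    by rewrite /A mulmxBr mulmxBl mxBE; ring.
  have Eh : Ex P h = (v *m B *m v^T) 0 0 - (v *m v^T) 0 0.
    rewrite /h Ex_add ?Ex_sub ?Ex_cst //; try (by do ?apply: Int_sub); try exact: Int_cst.
    rewrite E4 E5 S_mean !mulmx1; ring.
  have hgh : forall x, g x <= mu * h x.
    move=> x; have := rayleigh hd _ hMs ((v *m (S x - 1%:M))^T).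
    rewrite trmxK expand_quad //.
    have eh := expand_quad 1%:M (S x) v (hSs x).
    by rewrite !mulmx1 !mul1mx in eh; rewrite eh.
  have hEgh : Ex P g <= mu * Ex P h.
    rewrite -Ex_scale //; apply: Ex_le => //; exact: Int_scale.
  have hB := rayleigh hd _ hBs v^T; rewrite trmxK in hB.
  have : r * (v *m v^T) 0 0 <= mu * omega * (v *m v^T) 0 0.
    rewrite -e1 -Eg /omega; apply: (le_trans hEgh); rewrite Eh.
    rewrite -mulrA ler_pM2l // mulrBl mul1r lerD2r //.
  by rewrite ler_pM2r.
have hbl : beta * lam <= omega.
  have := ler_wpM2l (ltW beta_pos) hlam.
  by rewrite mulrA [beta * mu]mulrC hbeta mul1r.
split => //.
have hs := sqrtr_ge0 (1 + 4 * alpha * beta * lam).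
pose c := 2 / (1 + Num.sqrt (1 + 4 * alpha * beta * lam)).
have c_pos : 0 < c by rewrite /c divr_gt0 //; lra.
have lL_pos : 0 < lambda_max L by rewrite hlL.
have hd0 : d%:R != 0 :> R by rewrite pnatr_eq0 -lt0n.
have powK : forall y : R, 0 <= y -> (y ^+ d) `^ (d%:R^-1) = y.
  by move=> y hy; rewrite -powR_mulrn // -powRrM mulfV // powRr1.
have hdetD : \det Dstar = c ^+ d * (\det L)^-1.
  by rewrite /Dstar detZ /M det_inv.
rewrite hdetD powRM; first last.
- by rewrite invr_ge0 ltW.
- by rewrite exprn_ge0 // ltW.
rewrite powK; last exact: ltW.
have hinv : ((\det L)^-1) `^ (d%:R^-1) = ((\det L) `^ (d%:R^-1))^-1.
  by rewrite -powR_inv1 ?ltW // -powRrM mulN1r powRN.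
rewrite hinv invfM invrK.
have hX : (\det L) `^ (d%:R^-1) <= lambda_max L.
  rewrite -[X in _ <= X](powK (lambda_max L)); last exact: ltW.
  have hr : 0 <= d%:R^-1 :> R by rewrite invr_ge0 ler0n.
  apply: (ge0_ler_powR hr); first by rewrite nnegrE ltW.
    by rewrite nnegrE exprn_ge0 // ltW.
  rewrite hdetL hlL.
  have pc : \prod_(j < d) rL 0 iL = rL 0 iL ^+ d by rewrite prodr_const card_ord.
  rewrite -pc; apply: ler_prod => j _; by rewrite (ltW (hrL j)) /= hiL.
have hz : alpha * beta * lam <= (1 - p) * omega / (p * n%:R).
  have ha : 0 <= alpha.
    rewrite /alpha divr_ge0 //; first by lra.
    by rewrite mulr_ge0 ?ler0n // ltW.
  have := ler_wpM2l ha hbl; rewrite mulrA => h1; apply: (le_trans h1).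
  rewrite /alpha le_eqVlt; apply/orP; left; apply/eqP; field.
  by apply/andP; split; rewrite ?pnatr_eq0 -?lt0n // gt_eqF.
have e4 : 4 * (alpha * beta * lam) = 4 * alpha * beta * lam by rewrite mulrA mulrA.
have hfin := final_ineq _ _ hz; rewrite e4 in hfin.
have hc : c^-1 = (1 + Num.sqrt (1 + 4 * alpha * beta * lam)) / 2.
  by rewrite /c invf_div.
have ci : 0 <= c^-1 by rewrite invr_ge0 ltW.
apply: (le_trans (ler_wpM2l ci hX)).
rewrite mulrC hc; apply: ler_wpM2l; first exact: ltW.
exact: hfin.
Qed.
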